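(* Let $m<n$, let $A\in\mathbb{R}^{m\times n}$ and $b\in\mathbb{R}^{m}$, and assume that the system $Ax=b$ has a solution. Partition $A=[B~\tilde{B}]$ with $B\in\mathbb{R}^{m\times m}$ and $\tilde{B}\in\mathbb{R}^{m\times(n-m)}$. Assume that every diagonal entry of $B$ is nonzero and that every row $\tilde{B}_i$ of $\tilde{B}$ is nonzero. Let $L$ be the lower triangular part of $B$ (including the diagonal), $R=B-L$, $N(\tilde{B})=\operatorname{diag}(\|\tilde{B}_1\|_1,\ldots,\|\tilde{B}_m\|_1)$, and let $s(\tilde{B})\in\mathbb{R}^{(n-m)\times m}$ be the matrix whose $(j,i)$ entry is the sign ($1$, $0$ or $-1$) of the $(j,i)$ entry of $\tilde{B}^T$. Starting from any $x^{(0)}=\begin{bmatrix}x_1^{(0)}\\ x_2^{(0)}\end{bmatrix}$ with $x_1^{(0)}\in\mathbb{R}^m$, $x_2^{(0)}\in\mathbb{R}^{n-m}$, define for $k\ge 0$ the generalized Gauss–Seidel iteration $$x_2^{(k+1)}=x_2^{(k)}+s(\tilde{B})\,d^{(k)},\qquad d^{(k)}_i=\frac{b_i-B_ix_1^{(k)}-\tilde{B}_ix_2^{(k)}}{m\|\tilde{B}_i\|_1}\ (i=1,\ldots,m),$$ $$x_1^{(k+1)}=L^{-1}\big(-Rx_1^{(k)}+b-\tilde{B}x_2^{(k+1)}\big),\qquad x^{(k+1)}=\begin{bmatrix}x_1^{(k+1)}\\ x_2^{(k+1)}\end{bmatrix},$$ where $B_i,\tilde{B}_i$ denote the $i$th rows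 of $B,\tilde{B}$. If, for some matrix norm $\|\cdot\|$ on $\mathbb{R}^{m\times m}$, $$\|I-BL^{-1}\|<1\quad\text{and}\quad \|mI-\tilde{B}\,s(\tilde{B})\,N(\tilde{B})^{-1}\|<m,$$ then the sequence $(x^{(k)})$ converges and its limit $x=\lim_k x^{(k)}$ is a solution of $Ax=b$.
   Context: $\|\cdot\|_1$ denotes the $\ell_1$-norm of a vector. The $x_2$-update is the iterative method of Wheaton–Awoniyi applied to $\tilde{B}y=b-Bx_1^{(k)}$, and the $x_1$-update is one Gauss–Seidel step for $Bz=b-\tilde{B}x_2^{(k+1)}$ starting at $x_1^{(k)}$. *)

(* Defs.v *)
From HB Require Import structures.
From mathcomp Require Import all_boot all_order all_algebra.
From mathcomp Require Import all_classical all_reals all_analysis.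
Set Implicit Arguments. Unset Strict Implicit. Unset Printing Implicit Defensive.
Import Order.TTheory GRing.Theory Num.Theory.
Import numFieldNormedType.Exports.
Local Open Scope ring_scope.

Definition matrix_norm (R : realType) (m : nat) (nu : 'M[R]_m -> R) : Prop :=
  [/\ forall M, 0 <= nu M,
      forall M, nu M = 0 -> M = 0,
      forall (a : R) M, nu (a *: M) = `|a| * nu M,
      forall M M', nu (M + M') <= nu M + nu M'
    & forall M M', nu (M *m M') <= nu M * nu M'].

Definition lower_part (R : realType) (m : nat) (B : 'M[R]_m) : 'M[R]_m :=
  \matrix_(i, j) if (j <= i)%N then B i j else 0.

Definition row_l1 (R : realType) (m p : nat) (Bt : 'M[R]_(m, p)) (i : 'I_m) : R :=
  \sum_(j < p) `|Bt i j|.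

Definition Nmat (R : realType) (m p : nat) (Bt : 'M[R]_(m, p)) : 'M[R]_m :=
  diag_mx (\row_i row_l1 Bt i).

Definition smat (R : realType) (m p : nat) (Bt : 'M[R]_(m, p)) : 'M[R]_(p, m) :=
  \matrix_(j, i) Num.sg (Bt i j).

Definition dvec (R : realType) (m p : nat) (B : 'M[R]_m) (Bt : 'M[R]_(m, p))
  (b : 'cV[R]_m) (x1 : 'cV[R]_m) (x2 : 'cV[R]_p) : 'cV[R]_m :=
  \col_i ((b i 0 - (B *m x1) i 0 - (Bt *m x2) i 0) / (m%:R * row_l1 Bt i)).

(* Main.v *)
Require Import Defs.
From HB Require Import structures.
From mathcomp Require Import all_boot all_order all_algebra.
From mathcomp Require Import all_classical all_reals all_analysis.
Import Order.TTheory GRing.Theory Num.Theory.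
Import numFieldNormedType.Exports.
Local Open Scope ring_scope.

Section Helpers.
Local Set Implicit Arguments.
Local Unset Strict Implicit.

Lemma delta_sandwich (R : realType) (m : nat) (M : 'M[R]_m) (a : 'I_m) :
  delta_mx a a *m M *m delta_mx a a = M a a *: delta_mx a a.
Proof.
apply/matrixP => i j; rewrite !mxE.
rewrite (bigD1 a) //= big1 ?addr0; last first.
  by move=> k /negbTE kna; rewrite [delta_mx _ _ k j]mxE kna andFb mulr0.
rewrite [delta_mx _ _ a j]mxE eqxx andTb !mxE.
rewrite (bigD1 a) //= big1 ?addr0; last first.
  by move=> k /negbTE kna; rewrite mxE kna andbF mul0r.
rewrite mxE eqxx andbT.
by case: (i == a); case: (j == a); rewrite /= ?mul1r ?mulr1 ?mul0r ?mulr0.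
Qed.

Lemma entry_le (R : realType) (m : nat) (nu : 'M[R]_m -> R) (hnu : matrix_norm nu)
  (M : 'M[R]_m) (a : 'I_m) : `|M a a| <= nu (delta_mx a a) * nu M.
Proof.
case: hnu => nu0 nueq nuZ nuD nuM.
have Epos : 0 < nu (delta_mx a a).
  rewrite lt_def nu0 andbT; apply/eqP => /nueq /matrixP /(_ a a).
  by rewrite !mxE eqxx /= => /eqP; rewrite oner_eq0.
rewrite -(ler_pM2r Epos) -nuZ -delta_sandwich.
apply: le_trans (nuM _ _) _; rewrite ler_wpM2r ?nu0 //; exact: nuM.
Qed.

Lemma lower_unit (R : realType) (m : nat) (B : 'M[R]_m) :
  (forall i, B i i != 0) -> lower_part B \in unitmx.
Proof.
move=> hd; rewrite unitmxE det_trig; last first.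
  apply/forallP => i; apply/forallP => j; apply/implyP => lt.
  by rewrite mxE leqNgt lt.
rewrite unitfE; apply/prodf_neq0 => i _; rewrite mxE leqnn; exact: hd.
Qed.

Lemma row_l1_gt0 (R : realType) (m p : nat) (Bt : 'M[R]_(m, p)) i :
  row i Bt != 0 -> 0 < row_l1 Bt i.
Proof.
move=> hr; rewrite lt_def sumr_ge0 ?andbT //; apply/eqP => /psumr_eq0P h.
move/eqP: hr; apply; apply/matrixP => k j; rewrite !mxE.
by apply/normr0_eq0; apply: h.
Qed.

Lemma Nmat_inv (R : realType) (m p : nat) (Bt : 'M[R]_(m, p)) (r : 'cV[R]_m) :
  (forall i, row i Bt != 0) ->
  invmx (Nmat Bt) *m r = \col_i (r i 0 / row_l1 Bt i).
Proof.
move=> hr.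
have Nu : Nmat Bt \in unitmx.
  rewrite unitmxE det_diag unitfE; apply/prodf_neq0 => i _; rewrite mxE.
  by rewrite gt_eqF // row_l1_gt0.
have e : Nmat Bt *m \col_i (r i 0 / row_l1 Bt i) = r.
  apply/matrixP => i j; rewrite mul_diag_mx !mxE (ord1 j).
  by rewrite mulrC divfK // gt_eqF // row_l1_gt0.
by rewrite -{1}e mulKmx.
Qed.

Lemma Q_unit (R : realType) (m : nat) (nu : 'M[R]_m -> R) (hnu : matrix_norm nu)
  (P : 'M[R]_m) : nu P < 1 -> (1%:M - P) \in unitmx.
Proof.
case: hnu => nu0 nueq nuZ nuD nuM hP.
rewrite -row_full_unit -cokermx_eq0; apply/eqP.
set X := cokermx _.
have : (1%:M - P) *m X = 0 := mulmx_coker _.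
rewrite mulmxBl mul1mx => /eqP; rewrite subr_eq0 => /eqP hX.
apply: nueq; apply/eqP; rewrite eq_le nu0 andbT.
have h := nuM P X; rewrite -hX in h.
have : nu X * (1 - nu P) <= 0 by rewrite mulrBr mulr1 subr_le0 mulrC.
by rewrite pmulr_lle0 // subr_gt0.
Qed.

Lemma zA (V : zmodType) (a b c d : V) : a - c + b - d = a + (b - c - d).
Proof. by rewrite -!addrA (addrCA (-c)). Qed.

Lemma zB (V : zmodType) (b u v w : V) : b - (u + v) - w = b - u - w - v.
Proof. by rewrite opprD -!addrA (addrC (-v)). Qed.

Lemma zC (V : zmodType) (b u v : V) : u + v = b - (b - u - v).
Proof. by rewrite -addrA opprD addrA subrr add0r opprD !opprK. Qed.

End Helpers.

Theorem mainTheorem2 (R : realType) (m p : nat) (hp : (0 < p)%N)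
  (B : 'M[R]_m) (Bt : 'M[R]_(m, p)) (b : 'cV[R]_m)
  (hsol : exists x : 'cV[R]_(m + p), row_mx B Bt *m x = b)
  (hdiag : forall i : 'I_m, B i i != 0)
  (hrow : forall i : 'I_m, row i Bt != 0)
  (x1 : nat -> 'cV[R]_m) (x2 : nat -> 'cV[R]_p)
  (hx2 : forall k, x2 k.+1 = x2 k + smat Bt *m dvec B Bt b (x1 k) (x2 k))
  (hx1 : forall k, x1 k.+1 =
     invmx (lower_part B) *m (- ((B - lower_part B) *m x1 k) + b - Bt *m x2 k.+1))
  (nu : 'M[R]_m -> R) (hnu : matrix_norm nu)
  (h1 : nu (1%:M - B *m invmx (lower_part B)) < 1)
  (h2 : nu (m%:R%:M - Bt *m smat Bt *m invmx (Nmat Bt)) < m%:R) :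
  exists x : 'cV[R]_(m + p),
    ((fun k => col_mx (x1 k) (x2 k)) @ \oo --> x)%classic /\ row_mx B Bt *m x = b.
Proof.
have hnu' := hnu; case: hnu' => nu0 nueq nuZ nuD nuM.
have mpos : 0 < m%:R :> R by apply: le_lt_trans (nu0 _) h2.
have mne0 : m%:R != 0 :> R by rewrite gt_eqF.
have Lu := lower_unit hdiag.
set L := lower_part B in hx1 h1 Lu *.
set Li := invmx L in hx1 h1 *.
set S := m%:R^-1 *: (smat Bt *m invmx (Nmat Bt)).
set M1 := 1%:M - B *m Li in h1 *.
set M2 := 1%:M - Bt *m S.
have hM2 : nu M2 < 1.
  have e : m%:R *: M2 = m%:R%:M - Bt *m smat Bt *m invmx (Nmat Bt).
    rewrite /M2 /S scalerBr scalemx1 scalemxAr scalerA mulfV // scale1r mulmxA.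
    by [].
  move: h2; rewrite -e nuZ ger0_norm ?ltW // -{2}(mulr1 m%:R) ltr_pM2l //.
set P := M1 *m M2.
have hP : nu P <= nu M1 * nu M2 by apply: nuM.
set q := nu M1 * nu M2.
have q0 : 0 <= q by rewrite mulr_ge0.
have q1 : q < 1.
  have := nu0 M2; rewrite le_eqVlt => /orP[/eqP e|M20].
    by rewrite /q -e mulr0.
  apply: (@lt_le_trans _ _ (1 * nu M2)); first by rewrite /q ltr_pM2r.
  by rewrite mul1r ltW.
have hQ : (1%:M - P) \in unitmx by apply: (Q_unit hnu); apply: le_lt_trans hP q1.
set Q := 1%:M - P in hQ.
set Qi := invmx Q.
pose r k := b - B *m x1 k - Bt *m x2 k.
have hd k : smat Bt *m dvec B Bt b (x1 k) (x2 k) = S *m r k.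
  rewrite /S -scalemxAl -mulmxA (Nmat_inv _ hrow) scalemxAr; congr (_ *m _).
  apply/matrixP => i j; rewrite (ord1 j) !mxE.
  set u := (X in X / _ = _).
  by rewrite invfM mulrCA.
have hx2' k : x2 k.+1 = x2 k + S *m r k by rewrite hx2 hd.
have hr' k : b - B *m x1 k - Bt *m x2 k.+1 = M2 *m r k.
  by rewrite hx2' /M2 mulmxBl mul1mx mulmxDr -mulmxA /r opprD addrA.
have hx1' k : x1 k.+1 = x1 k + Li *m (M2 *m r k).
  rewrite hx1 -hr'.
  have -> : -((B - L) *m x1 k) + b - Bt *m x2 k.+1
          = L *m x1 k + (b - B *m x1 k - Bt *m x2 k.+1).
    by rewrite mulmxBl opprB zA.
  by rewrite mulmxDr mulKmx.
have hr k : r k.+1 = P *m r k.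
  rewrite {1}/r hx1' mulmxDr zB hr' /P -mulmxA /M1 mulmxBl mul1mx.
  by rewrite mulmxBl mul1mx mulmxA.
pose y k := Qi *m r k.
have hy k : y k = r k + y k.+1.
  apply/eqP; rewrite -subr_eq; apply/eqP.
  rewrite /y hr -mulmxBr.
  have -> : r k - P *m r k = Q *m r k by rewrite /Q mulmxBl mul1mx.
  by rewrite mulKmx.
pose c1 k := x1 k + Li *m (M2 *m y k).
pose c2 k := x2 k + S *m y k.
have hc1 k : c1 k = c1 0.
  elim: k => // k IH; rewrite -IH /c1 hx1' -addrA -!mulmxDr -hy.
  by [].
have hc2 k : c2 k = c2 0.
  elim: k => // k IH; rewrite -IH /c2 hx2' -addrA -!mulmxDr -hy.
  by [].
pose xs := col_mx (c1 0) (c2 0).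
have KQ : B *m Li *m M2 + Bt *m S = Q.
  rewrite /Q /P /M1 mulmxBl mul1mx (opprB M2) addrCA; congr (_ + _).
  by rewrite /M2 opprB addrC subrK.
exists xs; split; last first.
  rewrite mul_row_col /c1 /c2 !mulmxDr addrACA.
  have -> : B *m x1 0 + Bt *m x2 0 = b - r 0.
    exact: zC.
  rewrite !mulmxA -mulmxDl -mulmxDl KQ mulmxV // mul1mx.
  by rewrite subrK.
pose G := col_mx (Li *m M2) S *m Qi.
have ex k : xs - col_mx (x1 k) (x2 k) = G *m r k.
  rewrite /xs -(hc1 k) -(hc2 k) /c1 /c2 opp_col_mx add_col_mx.
  rewrite (addrC (x1 k)) (addrC (x2 k)) !addrK.
  by rewrite /G -mulmxA mul_col_mx -mulmxA.
pose Rk k := r k *m (const_mx 1 : 'rV[R]_m).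
have hR k : nu (Rk k) <= q ^+ k * nu (Rk 0).
  elim: k => [|k IH]; first by rewrite expr0 mul1r.
  have -> : Rk k.+1 = P *m Rk k by rewrite /Rk hr mulmxA.
  apply: le_trans (nuM _ _) _; rewrite exprS -mulrA.
  apply: le_trans (ler_wpM2r (nu0 _) hP) _.
  by rewrite -/q ler_wpM2l.
have hent k a : `|r k a 0| <= nu (delta_mx a a) * (q ^+ k * nu (Rk 0)).
  have -> : r k a 0 = Rk k a a by rewrite /Rk [RHS]mxE big_ord1 [const_mx _ _ _]mxE mulr1.
  apply: le_trans (entry_le hnu _ _) _; by rewrite ler_wpM2l // hR.
pose K := (\sum_i \sum_a `|G i a| * nu (delta_mx a a)) * nu (Rk 0).
have K0 : 0 <= K.
  by rewrite mulr_ge0 // sumr_ge0 // => i _; rewrite sumr_ge0 // => a _; rewrite mulr_ge0.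
have hbound k : `|xs - col_mx (x1 k) (x2 k)| <= K * q ^+ k.
  rewrite ex [leLHS]/Num.Def.normr /= mx_normrE.
  apply: bigmax_le; first by rewrite mulr_ge0 // exprn_ge0.
  move=> [i j] _ /=; rewrite (ord1 j) mxE.
  apply: le_trans (ler_norm_sum _ _ _) _.
  apply: (@le_trans _ _ (\sum_a `|G i a| * nu (delta_mx a a) * (q ^+ k * nu (Rk 0)))).
    apply: ler_sum => a _; rewrite normrM -mulrA; exact: ler_wpM2l (hent k a).
  rewrite -mulr_suml /K (mulrC (q ^+ k)) mulrA.
  apply: ler_wpM2r; first exact: exprn_ge0.
  apply: ler_wpM2r; first exact: nu0.
  rewrite (bigD1 i) //= lerDl sumr_ge0 // => i' _.
  by rewrite sumr_ge0 // => a _; rewrite mulr_ge0.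
apply/cvgrPdist_le => e e0.
have : `|q| < 1 by rewrite ger0_norm.
move=> /(cvg_geometric K) /cvgrPdist_le /(_ e e0).
apply: filterS => k /=; rewrite sub0r normrN ger0_norm => [hk|]; last first.
  by apply: mulr_ge0 => //; exact: exprn_ge0.
exact: le_trans (hbound k) hk.
Qed.
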